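(* Let $G$ be an additive group and let $(X,\rho)$ be the metric space described below. Then $X$ is an $\mathbb R$-tree.
   Context: A function on an interval $(\alpha,\beta)$ is piecewise constant from the left if for every $x$ there is $\varepsilon>0$ with $f$ constant on $[x-\varepsilon,x]$. $X$ is the set of pairs $(f,a_f)$, $a_f>0$ real, $f:(a_f,+\infty)\to G$ piecewise constant from the left with $f|_{(b_f,+\infty)}\equiv0$ for some $b_f\ge a_f$. Order: $(f,a_f)\preceq(g,a_g)$ iff $a_f\le a_g$ and $f|_{(a_g,+\infty)}=g$; any two elements $p,q$ have a supremum $p\vee q$. Metric: $\rho((f,a_f),(g,a_g))=|a_f-a_g|$ if the pairs are comparable, and $\rho(p,q)=\rho(p,p\vee q)+\rho(p\vee q,q)$ otherwise. An $\mathbb R$-tree is a geodesic metric space in which any two points are joined by a unique segment and $[xy]\subset[xz]\cup[zy]$ for all $x,y,z$. *)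

(* Defs.v *)
From Stdlib Require Import Reals Lra ClassicalEpsilon ClassicalDescription.
From mathcomp Require Import ssreflect ssrfun ssrbool eqtype ssralg.
Set Implicit Arguments.
Open Scope R_scope.

Definition geodesic (T : Type) (d : T -> T -> R) (x y : T) (gamma : R -> T) : Prop :=
  gamma 0 = x /\ gamma (d x y) = y /\
  forall s t, 0 <= s <= d x y -> 0 <= t <= d x y ->
    d (gamma s) (gamma t) = Rabs (s - t).

Definition geod_image (T : Type) (d : T -> T -> R) (x y : T) (gamma : R -> T) (p : T) : Prop :=
  exists t, 0 <= t <= d x y /\ gamma t = p.

(* the segment [xy]: points lying on a geodesic from x to y
   (it is the unique segment once uniqueness holds) *)
Definition segment (T : Type) (d : T -> T -> R) (x y : T) (p : T) : Prop :=
  exists gamma, geodesic d x y gamma /\ geod_image d x y gamma p.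

Definition is_metric (T : Type) (d : T -> T -> R) : Prop :=
  (forall x y, d x y = 0 <-> x = y) /\
  (forall x y, d x y = d y x) /\
  (forall x y z, d x z <= d x y + d y z).

Definition is_Rtree (T : Type) (d : T -> T -> R) : Prop :=
  is_metric d /\
  (forall x y, exists gamma, geodesic d x y gamma) /\
  (forall x y g1 g2, geodesic d x y g1 -> geodesic d x y g2 ->
     forall p, geod_image d x y g1 p <-> geod_image d x y g2 p) /\
  (forall x y z p, segment d x y p -> segment d x z p \/ segment d z y p).

Section X.
Variable G : zmodType.

(* f : (a, +oo) -> G is represented by a total function R -> G that is
   normalized to 0 outside of (a, +oo), so that equal pairs are Leibniz equal. *)
Record Xelt : Type := MkX {
  xf : R -> G;
  xa : R;
  xa_pos : 0 < xa;
  xf_out : forall x, x <= xa -> xf x = GRing.zero;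
  xf_pcl : forall x, xa < x -> exists eps, 0 < eps /\ xa < x - eps /\
             forall y, x - eps <= y <= x -> xf y = xf x;
  xf_ev : exists b, xa <= b /\ forall x, b < x -> xf x = GRing.zero
}.

Definition Xle (p q : Xelt) : Prop :=
  xa p <= xa q /\ forall x, xa q < x -> xf p x = xf q x.

Definition is_sup (p q s : Xelt) : Prop :=
  Xle p s /\ Xle q s /\ forall u, Xle p u -> Xle q u -> Xle s u.

Lemma X0_out : forall x, x <= 1 -> (fun _ : R => (GRing.zero : G)) x = GRing.zero.
Proof. by []. Qed.
Lemma X0_pcl : forall x, 1 < x -> exists eps, 0 < eps /\ 1 < x - eps /\
   forall y, x - eps <= y <= x -> (fun _ : R => (GRing.zero : G)) y = (fun _ : R => GRing.zero) x.
Proof. move=> x hx; exists ((x - 1) / 2); split; [lra|split; [lra|by []]]. Qed.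
Lemma X0_ev : exists b, 1 <= b /\ forall x, b < x -> (fun _ : R => (GRing.zero : G)) x = GRing.zero.
Proof. exists 1; split; [lra|by []]. Qed.

Definition X0 : Xelt := @MkX (fun _ => GRing.zero) 1 Rlt_0_1 X0_out X0_pcl X0_ev.

Definition inhX : inhabited Xelt := inhabits X0.

(* the supremum p \/ q (chosen; its existence is a claim of the paper) *)
Definition Xjoin (p q : Xelt) : Xelt := epsilon inhX (is_sup p q).

Definition rho (p q : Xelt) : R :=
  if excluded_middle_informative (Xle p q \/ Xle q p)
  then Rabs (xa p - xa q)
  else Rabs (xa p - xa (Xjoin p q)) + Rabs (xa (Xjoin p q) - xa q).

End X.

(* Main.v *)
Require Import Defs.
From Stdlib Require Import Reals Lra ClassicalEpsilon ClassicalDescription FunctionalExtensionality ProofIrrelevance Classical.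
From mathcomp Require Import ssreflect ssralg.
Open Scope R_scope.

Lemma Xeq {G : zmodType} (p q : Xelt G) : xa p = xa q -> (forall x, xf p x = xf q x) -> p = q.
Proof.
  destruct p as [f a ha hout hpcl hev], q as [g b hb hout' hpcl' hev']; simpl.
  intros Ha Hf. assert (f = g) by (apply functional_extensionality; exact Hf). subst g b.
  f_equal; apply proof_irrelevance.
Qed.

Lemma Xle_refl {G : zmodType} (p : Xelt G) : Xle p p.
Proof. split; [lra| by []]. Qed.

Lemma Xle_trans {G : zmodType} {p q r : Xelt G} : Xle p q -> Xle q r -> Xle p r.
Proof.
  move=> [h1 h2] [h3 h4]; split; [lra|].
  move=> x hx. rewrite h2; [|lra]. by apply h4.
Qed.

Lemma Xle_eqa {G : zmodType} (p q : Xelt G) : Xle p q -> xa p = xa q -> p = q.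
Proof.
  move=> [h1 h2] ha. apply Xeq; [exact ha| move=> x].
  destruct (Rle_dec x (xa q)) as [hx|hx].
  - rewrite (@xf_out G p x ltac:(lra)). by rewrite (@xf_out G q x ltac:(lra)).
  - apply h2; lra.
Qed.

Lemma Xle_antisym {G : zmodType} (p q : Xelt G) : Xle p q -> Xle q p -> p = q.
Proof. move=> h1 h2. apply Xle_eqa => //. destruct h1, h2; lra. Qed.

Lemma chain {G : zmodType} {y u v : Xelt G} : Xle y u -> Xle y v -> xa u <= xa v -> Xle u v.
Proof.
  move=> [h1 h2] [h3 h4] h; split => // x hx.
  rewrite -(h2 x ltac:(lra)). apply h4; lra.
Qed.

Lemma chain2 {G : zmodType} {y u v : Xelt G} : Xle y u -> Xle y v -> Xle u v \/ Xle v u.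
Proof.
  move=> h1 h2. destruct (Rle_dec (xa u) (xa v)).
  - left; apply: chain h1 h2 _; lra.
  - right; apply: chain h2 h1 _; lra.
Qed.

Definition upf {G : zmodType} (p : Xelt G) (c : R) (x : R) : G :=
  match Rlt_dec (Rmax c (xa p)) x with left _ => xf p x | right _ => GRing.zero end.

Lemma upX_pos {G : zmodType} (p : Xelt G) c : 0 < Rmax c (xa p).
Proof. have := Rmax_r c (xa p). have := xa_pos p. lra. Qed.

Lemma upX_out {G : zmodType} (p : Xelt G) c : forall x, x <= Rmax c (xa p) -> upf p c x = GRing.zero.
Proof. move=> x hx. rewrite /upf. destruct Rlt_dec => //. lra. Qed.

Lemma upX_pcl {G : zmodType} (p : Xelt G) c : forall x, Rmax c (xa p) < x -> exists eps, 0 < eps /\ Rmax c (xa p) < x - eps /\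
             forall y, x - eps <= y <= x -> upf p c y = upf p c x.
Proof.
  move=> x hx. have hM := Rmax_r c (xa p).
  have [eps [he [he2 he3]]] := @xf_pcl G p x ltac:(lra).
  exists (Rmin eps ((x - Rmax c (xa p)) / 2)).
  have h1 := Rmin_l eps ((x - Rmax c (xa p)) / 2).
  have h2 := Rmin_r eps ((x - Rmax c (xa p)) / 2).
  split; [apply Rmin_pos; lra|]. split; [lra|].
  move=> y hy. rewrite /upf. destruct (Rlt_dec _ y); [|lra]. destruct (Rlt_dec _ x); [|lra].
  apply he3; lra.
Qed.

Lemma upX_ev {G : zmodType} (p : Xelt G) c : exists b, Rmax c (xa p) <= b /\ forall x, b < x -> upf p c x = GRing.zero.
Proof.
  have [b [hb1 hb2]] := xf_ev p.
  exists (Rmax b (Rmax c (xa p))). split; [apply Rmax_r|].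
  move=> x hx. have := Rmax_l b (Rmax c (xa p)). move=> h.
  rewrite /upf. destruct Rlt_dec => //. apply hb2; lra.
Qed.

Definition upX {G : zmodType} (p : Xelt G) (c : R) : Xelt G :=
  @MkX G (upf p c) (Rmax c (xa p)) (upX_pos p c) (upX_out p c) (upX_pcl p c) (upX_ev p c).

Lemma xa_upX {G : zmodType} (p : Xelt G) c : xa (upX p c) = Rmax c (xa p).
Proof. by []. Qed.

Lemma Xle_upX {G : zmodType} (p : Xelt G) c : Xle p (upX p c).
Proof.
  split; [apply Rmax_r|]. move=> x /= hx. rewrite /upf. destruct Rlt_dec => //; lra.
Qed.

Lemma upX_of_le {G : zmodType} (p z : Xelt G) : Xle p z -> z = upX p (xa z).
Proof.
  move=> [h1 h2]. apply Xeq; simpl. by rewrite Rmax_left.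
  move=> x. rewrite /upf Rmax_left //. destruct Rlt_dec. by rewrite h2.
  apply xf_out; lra.
Qed.

Lemma upX_eq {G : zmodType} (p z : Xelt G) c : Xle p z -> xa z = c -> upX p c = z.
Proof. move=> h <-. by rewrite -upX_of_le. Qed.

Lemma exists_sup {G : zmodType} (p q : Xelt G) : exists s, is_sup p q s.
Proof.
  set S := fun c => Rmax (xa p) (xa q) <= c /\ forall x, c < x -> xf p x = xf q x.
  set E := fun y => forall c, S c -> y <= c.
  have [bp [hbp1 hbp2]] := xf_ev p.
  have [bq [hbq1 hbq2]] := xf_ev q.
  set c0 := Rmax (Rmax (xa p) (xa q)) (Rmax bp bq).
  have Sc0 : S c0.
  { split; [apply Rmax_l|]. move=> x hx. rewrite /c0 in hx.
    have := Rmax_r (Rmax (xa p) (xa q)) (Rmax bp bq). have := Rmax_l bp bq. have := Rmax_r bp bq.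
    move=> h1 h2 h3. rewrite (hbp2 x ltac:(lra)) (hbq2 x ltac:(lra)). by []. }
  have hb : bound E. { exists c0 => y hy. by apply hy. }
  have hne : exists x, E x. { exists (Rmax (xa p) (xa q)) => c [hc _]. by []. }
  have [m [hm1 hm2]] := completeness E hb hne.
  have hmS : forall c, S c -> m <= c.
  { move=> c hc. apply hm2 => y hy. by apply hy. }
  have hm0 : Rmax (xa p) (xa q) <= m. { apply hm1 => c [hc _]. by []. }
  have hm : forall x, m < x -> xf p x = xf q x.
  { move=> x hx. apply NNPP => hneq.
    have : E x. { move=> c [hc1 hc2]. destruct (Rle_dec x c) => //.
      exfalso. apply hneq. apply hc2. lra. }
    move=> /hm1. lra. }
  have hap := Rmax_l (xa p) (xa q). have haq := Rmax_r (xa p) (xa q).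
  exists (upX p m).
  have hM : Rmax m (xa p) = m by apply Rmax_left; lra.
  split; [apply Xle_upX|]. split.
  - split; simpl; [rewrite hM; lra|]. move=> x hx. rewrite /upf. rewrite hM in hx *.
    destruct Rlt_dec; [|lra]. by rewrite (hm x ltac:(lra)).
  - move=> u [hu1 hu2] [hu3 hu4].
    have hSu : S (xa u).
    { split. apply Rmax_lub; lra. move=> x hx. rewrite (hu2 x ltac:(lra)). by rewrite (hu4 x ltac:(lra)). }
    have := hmS _ hSu. move=> hmu.
    split; simpl; [rewrite hM; lra|]. move=> x hx. rewrite /upf hM in hx *.
    destruct Rlt_dec; [|lra]. by rewrite (hu2 x ltac:(lra)).
Qed.

Lemma join_spec {G : zmodType} (p q : Xelt G) : is_sup p q (Xjoin p q).
Proof. rewrite /Xjoin. apply epsilon_spec. apply exists_sup. Qed.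

Lemma sup_unique {G : zmodType} (p q s : Xelt G) : is_sup p q s -> Xjoin p q = s.
Proof.
  move=> [h1 [h2 h3]]. have [j1 [j2 j3]] := join_spec p q.
  apply Xle_antisym; [apply j3|apply h3]; done.
Qed.

Lemma join_le_l {G : zmodType} (p q : Xelt G) : Xle p (Xjoin p q).
Proof. by have [? [? ?]] := join_spec p q. Qed.
Lemma join_le_r {G : zmodType} (p q : Xelt G) : Xle q (Xjoin p q).
Proof. by have [? [? ?]] := join_spec p q. Qed.
Lemma join_least {G : zmodType} (p q u : Xelt G) : Xle p u -> Xle q u -> Xle (Xjoin p q) u.
Proof. have [? [? h]] := join_spec p q. apply h. Qed.

Lemma join_comm {G : zmodType} (p q : Xelt G) : Xjoin p q = Xjoin q p.
Proof.
  apply sup_unique. split; [apply join_le_r|split; [apply join_le_l|]].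
  move=> u h1 h2. by apply join_least.
Qed.

Lemma join_of_le {G : zmodType} (p q : Xelt G) : Xle p q -> Xjoin p q = q.
Proof.
  move=> h. apply sup_unique. split => //. split; [apply Xle_refl|]. by move=> u _ ?.
Qed.

Lemma join_of_ge {G : zmodType} (p q : Xelt G) : Xle q p -> Xjoin p q = p.
Proof. move=> h. rewrite join_comm. by apply join_of_le. Qed.

Lemma join_between {G : zmodType} {p q u v : Xelt G} :
  Xle p u -> Xle q v -> Xle u (Xjoin p q) -> Xle v (Xjoin p q) -> Xjoin u v = Xjoin p q.
Proof.
  move=> h1 h2 h3 h4. apply Xle_antisym.
  - by apply join_least.
  - apply join_least.
    + apply: Xle_trans h1 _. apply join_le_l.
    + apply: Xle_trans h2 _. apply join_le_r.
Qed.

Lemma xa_le {G : zmodType} {p q : Xelt G} : Xle p q -> xa p <= xa q.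
Proof. by case. Qed.

Lemma rho_eq {G : zmodType} (p q : Xelt G) :
  rho p q = (xa (Xjoin p q) - xa p) + (xa (Xjoin p q) - xa q).
Proof.
  have h1 := xa_le (join_le_l p q). have h2 := xa_le (join_le_r p q).
  rewrite /rho. destruct excluded_middle_informative as [[h|h]|h]; simpl.
  - rewrite join_of_le //. have := xa_le h. move=> ?. rewrite Rabs_left1; lra.
  - rewrite join_of_ge //. have := xa_le h. move=> ?. rewrite Rabs_right; lra.
  - rewrite Rabs_left1; [|lra]. rewrite Rabs_right; lra.
Qed.

Lemma rho_le {G : zmodType} {p q : Xelt G} : Xle p q -> rho p q = xa q - xa p.
Proof. move=> h. rewrite rho_eq join_of_le //. lra. Qed.

Lemma rho_sym {G : zmodType} (p q : Xelt G) : rho p q = rho q p.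
Proof. rewrite !rho_eq join_comm. lra. Qed.

Lemma rho_nonneg {G : zmodType} (p q : Xelt G) : 0 <= rho p q.
Proof.
  have h1 := xa_le (join_le_l p q). have h2 := xa_le (join_le_r p q).
  rewrite rho_eq. lra.
Qed.

Lemma rho_metric {G : zmodType} : is_metric (@rho G).
Proof.
  split; [|split].
  - move=> x y; split.
    + have h1 := xa_le (join_le_l x y). have h2 := xa_le (join_le_r x y).
      rewrite rho_eq => h.
      have e1 : x = Xjoin x y by apply Xle_eqa; [apply join_le_l|lra].
      have e2 : y = Xjoin x y by apply Xle_eqa; [apply join_le_r|lra].
      by rewrite e1 -e2.
    + move=> <-. rewrite (rho_le (Xle_refl x)); lra.
  - apply rho_sym.
  - move=> x y z. rewrite !rho_eq.
    have a1 := join_le_l x y. have a2 := join_le_r x y.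
    have b1 := join_le_l y z. have b2 := join_le_r y z.
    have c1 := xa_le (join_le_l x z). have c2 := xa_le (join_le_r x z).
    have := xa_le a2. have := xa_le b1. move=> d1 d2.
    case: (chain2 a2 b1) => h.
    + have : Xle (Xjoin x z) (Xjoin y z).
      { apply join_least => //. apply: Xle_trans a1 h. }
      move=> /xa_le. have := xa_le h. have := xa_le a1. have := xa_le b2. lra.
    + have : Xle (Xjoin x z) (Xjoin x y).
      { apply join_least => //. apply: Xle_trans b2 h. }
      move=> /xa_le. have := xa_le h. have := xa_le a1. have := xa_le b2. lra.
Qed.

Definition gam {G : zmodType} (p q : Xelt G) (t : R) : Xelt G :=
  match Rle_dec t (xa (Xjoin p q) - xa p) with
  | left _ => upX p (xa p + t)
  | right _ => upX q (xa q + rho p q - t) end.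

Lemma gam_l {G : zmodType} (p q : Xelt G) t : 0 <= t <= xa (Xjoin p q) - xa p ->
  Xle p (gam p q t) /\ Xle (gam p q t) (Xjoin p q) /\ xa (gam p q t) = xa p + t.
Proof.
  move=> ht. rewrite /gam. destruct Rle_dec as [h|h]; [|lra].
  have ha : xa (upX p (xa p + t)) = xa p + t by rewrite xa_upX Rmax_left; lra.
  split; [apply Xle_upX|split => //].
  apply: (chain (Xle_upX p _) (join_le_l p q)). lra.
Qed.

Lemma gam_r {G : zmodType} (p q : Xelt G) t : xa (Xjoin p q) - xa p < t <= rho p q ->
  Xle q (gam p q t) /\ Xle (gam p q t) (Xjoin p q) /\ xa (gam p q t) = xa q + rho p q - t.
Proof.
  move=> ht. have hD := rho_eq p q. rewrite /gam. destruct Rle_dec as [h|h]; [lra|].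
  have ha : xa (upX q (xa q + rho p q - t)) = xa q + rho p q - t by rewrite xa_upX Rmax_left; lra.
  split; [apply Xle_upX|split => //].
  apply: (chain (Xle_upX q _) (join_le_r p q)). lra.
Qed.

Lemma rho_chain {G : zmodType} {y u v : Xelt G} : Xle y u -> Xle y v -> rho u v = Rabs (xa u - xa v).
Proof.
  move=> h1 h2. case: (chain2 h1 h2) => h.
  - rewrite (rho_le h). have := xa_le h. unfold Rabs; destruct Rcase_abs; lra.
  - rewrite rho_sym (rho_le h). have := xa_le h. unfold Rabs; destruct Rcase_abs; lra.
Qed.

Lemma gam_geod {G : zmodType} (p q : Xelt G) : geodesic (@rho G) p q (gam p q).
Proof.
  have hD := rho_eq p q.
  have j1 := xa_le (join_le_l p q). have j2 := xa_le (join_le_r p q).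
  split; [|split].
  - rewrite /gam. destruct Rle_dec as [h|h]; [|lra].
    apply upX_eq; [apply Xle_refl|lra].
  - rewrite /gam. destruct Rle_dec as [h|h].
    + have e : q = Xjoin p q by apply Xle_eqa; [apply join_le_r|lra].
      transitivity (Xjoin p q); [apply upX_eq; [apply join_le_l|lra]|by rewrite -e].
    + apply upX_eq; [apply Xle_refl|lra].
  - move=> s t hs ht.
    destruct (Rle_dec s (xa (Xjoin p q) - xa p)) as [h1|h1];
    destruct (Rle_dec t (xa (Xjoin p q) - xa p)) as [h2|h2].
    + have [a1 [a2 a3]] := gam_l p q s ltac:(lra).
      have [b1 [b2 b3]] := gam_l p q t ltac:(lra).
      rewrite (rho_chain a1 b1) a3 b3. f_equal. lra.
    + have [a1 [a2 a3]] := gam_l p q s ltac:(lra).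
      have [b1 [b2 b3]] := gam_r p q t ltac:(lra).
      rewrite rho_eq (join_between a1 b1 a2 b2) a3 b3.
      rewrite Rabs_left1; lra.
    + have [a1 [a2 a3]] := gam_r p q s ltac:(lra).
      have [b1 [b2 b3]] := gam_l p q t ltac:(lra).
      rewrite rho_sym rho_eq (join_between b1 a1 b2 a2) a3 b3.
      rewrite Rabs_right; lra.
    + have [a1 [a2 a3]] := gam_r p q s ltac:(lra).
      have [b1 [b2 b3]] := gam_r p q t ltac:(lra).
      rewrite (rho_chain a1 b1) a3 b3. unfold Rabs; destruct Rcase_abs; destruct Rcase_abs; lra.
Qed.

Definition betw {G : zmodType} (x z y : Xelt G) := rho x z + rho z y = rho x y.

Lemma betw_sym {G : zmodType} {x z y : Xelt G} : betw x z y -> betw y z x.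
Proof. rewrite /betw (rho_sym x z) (rho_sym z y) (rho_sym x y). lra. Qed.

Lemma betw_char {G : zmodType} {p z q : Xelt G} : betw p z q ->
  (Xle p z /\ Xle z (Xjoin p q)) \/ (Xle q z /\ Xle z (Xjoin p q)).
Proof.
  rewrite /betw !rho_eq => hb.
  have u1 := join_le_l p z. have u2 := join_le_r p z.
  have v1 := join_le_l z q. have v2 := join_le_r z q.
  have := xa_le u1. have := xa_le u2. have := xa_le v1. have := xa_le v2.
  move=> w1 w2 w3 w4.
  case: (chain2 u2 v1) => h.
  - have hJ : Xle (Xjoin p q) (Xjoin z q) by apply join_least; [apply: Xle_trans u1 h|].
    have := xa_le hJ. have := xa_le h. move=> k1 k2.
    have ez : z = Xjoin p z by apply Xle_eqa; [|lra].
    have eJ : Xjoin p q = Xjoin z q by apply Xle_eqa; [|lra].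
    left; split; [by rewrite ez|]. by rewrite eJ.
  - have hJ : Xle (Xjoin p q) (Xjoin p z) by apply join_least; [|apply: Xle_trans v2 h].
    have := xa_le hJ. have := xa_le h. move=> k1 k2.
    have ez : z = Xjoin z q by apply Xle_eqa; [|lra].
    have eJ : Xjoin p q = Xjoin p z by apply Xle_eqa; [|lra].
    right; split; [by rewrite ez|]. by rewrite eJ.
Qed.

Lemma char_betw {G : zmodType} (p z q : Xelt G) :
  (Xle p z /\ Xle z (Xjoin p q)) \/ (Xle q z /\ Xle z (Xjoin p q)) -> betw p z q.
Proof.
  rewrite /betw. move=> [[h1 h2]|[h1 h2]].
  - rewrite (rho_le h1) (rho_eq z q) (rho_eq p q).
    rewrite (join_between h1 (Xle_refl q) h2 (join_le_r p q)). lra.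
  - rewrite (rho_sym z q) (rho_le h1) (rho_eq p z) (rho_eq p q).
    rewrite (join_between (Xle_refl p) h1 (join_le_l p q) h2). lra.
Qed.

Lemma betw_gam {G : zmodType} {p z q : Xelt G} : betw p z q -> gam p q (rho p z) = z.
Proof.
  move=> hb. have hD := rho_eq p q.
  have j1 := xa_le (join_le_l p q). have j2 := xa_le (join_le_r p q).
  case: (betw_char hb) => [[h1 h2]|[h1 h2]].
  - rewrite (rho_le h1). have := xa_le h2. move=> k.
    rewrite /gam. destruct Rle_dec as [h|h]; [|lra].
    apply upX_eq => //. lra.
  - have ht : rho p z = rho p q - (xa z - xa q).
    { move: hb. rewrite /betw (rho_sym z q) (rho_le h1). lra. }
    have := xa_le h2. have := xa_le h1. move=> k1 k2.
    rewrite ht /gam. destruct Rle_dec as [h|h].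
    + have ez : z = Xjoin p q by apply Xle_eqa => //; lra.
      have hpz : Xle p z by rewrite ez; apply join_le_l.
      apply upX_eq => //. lra.
    + apply upX_eq => //. lra.
Qed.

Lemma geod_betw {G : zmodType} {x y : Xelt G} {g t} : geodesic (@rho G) x y g ->
  0 <= t <= rho x y -> betw x (g t) y /\ rho x (g t) = t.
Proof.
  move=> [h0 [hD hi]] ht.
  have e1 := hi 0 t ltac:(have := rho_nonneg x y; lra) ht.
  have e2 := hi t (rho x y) ht ltac:(have := rho_nonneg x y; lra).
  rewrite h0 in e1. rewrite hD in e2.
  rewrite /betw e1 e2 (Rabs_left1 (0 - t) ltac:(lra)) (Rabs_left1 (t - rho x y) ltac:(lra)). split; lra.
Qed.

Lemma betw_seg {G : zmodType} {x p y : Xelt G} : betw x p y -> segment (@rho G) x y p.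
Proof.
  move=> hb. exists (gam x y). split; [apply gam_geod|].
  exists (rho x p). split; [|by apply betw_gam].
  have := rho_nonneg x p. have := rho_nonneg p y. move: hb. rewrite /betw. lra.
Qed.

Lemma transA {G : zmodType} {x y : Xelt G} (z : Xelt G) {p : Xelt G} : Xle x p -> Xle p (Xjoin x y) ->
  betw x p z \/ betw z p y.
Proof.
  move=> hxp hpj.
  case: (classic (Xle p (Xjoin x z))) => c1.
  { left. apply char_betw. by left. }
  have hxz : Xle (Xjoin x z) p.
  { case: (chain2 (join_le_l x z) hxp) => // h. }
  have hzp : Xle z p := Xle_trans (join_le_r x z) hxz.
  case: (classic (Xle p (Xjoin z y))) => c2.
  { right. apply char_betw. by left. }
  exfalso.
  case: (chain2 (join_le_r x z) (join_le_l z y)) => h.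
  - apply c2. apply: Xle_trans hpj _. apply join_least.
    + apply: Xle_trans (join_le_l x z) h.
    + apply join_le_r.
  - apply c1. apply: Xle_trans hpj _. apply join_least.
    + apply join_le_l.
    + apply: Xle_trans (join_le_r z y) h.
Qed.

Theorem corollary1 (G : zmodType) : is_Rtree (@rho G).
Proof.
  split; [apply rho_metric|split; [|split]].
  - move=> x y. exists (gam x y). apply gam_geod.
  - have key : forall x y g, geodesic (@rho G) x y g -> forall t, 0 <= t <= rho x y -> g t = gam x y t.
    { move=> x y g hg t ht. have [hb he] := geod_betw hg ht.
      have := betw_gam hb. rewrite he. by move=> ->. }
    move=> x y g1 g2 h1 h2 p; split; move=> [t [ht <-]]; exists t; split => //.
    + by rewrite (key _ _ _ h1 t ht) (key _ _ _ h2 t ht).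
    + by rewrite (key _ _ _ h1 t ht) (key _ _ _ h2 t ht).
  - move=> x y z p [g [hg [t [ht <-]]]].
    have [hb _] := geod_betw hg ht.
    case: (betw_char hb) => [[h1 h2]|[h1 h2]].
    + case: (transA z h1 h2) => h; [left|right]; by apply betw_seg.
    + rewrite join_comm in h2.
      case: (transA z h1 h2) => h.
      * right. apply betw_seg. by apply betw_sym.
      * left. apply betw_seg. by apply betw_sym.
Qed.
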